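(* Fix $x,y>0$. As a function of the pair $(r,s)$, the extended mean value $E(r,s;x,y)$ is Schur-concave on $[0,\infty)\times[0,\infty)$ and Schur-convex on $(-\infty,0]\times(-\infty,0]$.
   Context: For $x,y>0$ and $r,s\in\mathbb{R}$ the extended mean values are defined by $E(r,s;x,y)=\bigl(\frac{r}{s}\cdot\frac{y^s-x^s}{y^r-x^r}\bigr)^{1/(s-r)}$ if $rs(r-s)(x-y)\neq0$; $E(r,0;x,y)=E(0,r;x,y)=\bigl(\frac1r\cdot\frac{y^r-x^r}{\ln y-\ln x}\bigr)^{1/r}$ if $r(x-y)\neq0$; $E(r,r;x,y)=e^{-1/r}\bigl(\frac{x^{x^r}}{y^{y^r}}\bigr)^{1/(x^r-y^r)}$ if $r(x-y)\neq0$; $E(0,0;x,y)=\sqrt{xy}$ if $x\neq y$; $E(r,s;x,x)=x$. A function $f$ of two real variables defined on $I\times I$ ($I$ an interval) is Schur-convex if $f(r,s)\le f(r',s')$ whenever $(r,s),(r',s')\in I^2$ satisfy $(r,s)\prec(r',s')$, meaning $r+s=r'+s'$ and $\max\{r,s\}\le\max\{r',s'\}$; $f$ is Schur-concave if $-f$ is Schur-convex. *)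

(* Defs.v *)
From Stdlib Require Import Reals Lra.
Open Scope R_scope.

Definition E (r s x y : R) : R :=
  if Req_EM_T x y then x else
  if Req_EM_T r 0 then
    (if Req_EM_T s 0 then sqrt (x * y)
     else Rpower (/ s * ((Rpower y s - Rpower x s) / (ln y - ln x))) (/ s))
  else if Req_EM_T s 0 then
    Rpower (/ r * ((Rpower y r - Rpower x r) / (ln y - ln x))) (/ r)
  else if Req_EM_T r s then
    exp (- / r) *
      Rpower (Rpower x (Rpower x r) / Rpower y (Rpower y r))
             (/ (Rpower x r - Rpower y r))
  else
    Rpower ((r / s) * ((Rpower y s - Rpower x s) / (Rpower y r - Rpower x r)))
           (/ (s - r)).

Definition majorized (r s r' s' : R) : Prop :=
  r + s = r' + s' /\ Rmax r s <= Rmax r' s'.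

Definition SchurConvex (I : R -> Prop) (f : R -> R -> R) : Prop :=
  forall r s r' s', I r -> I s -> I r' -> I s' ->
    majorized r s r' s' -> f r s <= f r' s'.

Definition SchurConcave (I : R -> Prop) (f : R -> R -> R) : Prop :=
  SchurConvex I (fun r s => - f r s).

(* Main.v *)
Require Import Defs.
From Stdlib Require Import Reals Lra Psatz.
Open Scope R_scope.

Lemma mvt_gen (f f' : R -> R) (a b : R) :
  a < b -> (forall c, a < c < b -> derivable_pt_lim f c (f' c)) ->
  (forall c, a <= c <= b -> continuity_pt f c) ->
  exists c, a < c < b /\ f b - f a = f' c * (b - a).
Proof.
  intros Hab Hd Hc.
  destruct (MVT f id a b (fun c P => exist _ (f' c) (Hd c P))
     (fun c P => derivable_pt_id c) Hab Hc
     (fun c _ => derivable_continuous_pt _ _ (derivable_pt_id c))) as [c [P HP]].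
  exists c; split; [exact P|].
  simpl in HP. rewrite derive_pt_id in HP. unfold id in HP. lra.
Qed.

Section LemA.
Variables (psi psi1 psi2 : R -> R).
Hypothesis H1 : forall t, 0 < t -> derivable_pt_lim psi t (psi1 t).
Hypothesis H2 : forall t, 0 < t -> derivable_pt_lim psi1 t (psi2 t).
Hypothesis H3 : forall t1 t2, 0 < t1 -> t1 <= t2 -> psi2 t2 <= psi2 t1.
Hypothesis H4 : continuity_pt psi 0.

Lemma psi_cont t : 0 <= t -> continuity_pt psi t.
Proof.
  intros [Ht|<-]; [|exact H4].
  apply derivable_continuous_pt. exists (psi1 t). now apply H1.
Qed.

Lemma psi1_mono m u1 u2 : 0 <= u1 -> u1 < u2 -> u2 < m ->
  psi1 (m + u2) + psi1 (m - u2) <= psi1 (m + u1) + psi1 (m - u1).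
Proof.
  intros h1 h2 h3.
  destruct (MVT_cor2 psi1 psi2 (m+u1) (m+u2)) as [xi [Exi Ixi]]; [lra| |].
  { intros c Hc; apply H2; lra. }
  destruct (MVT_cor2 psi1 psi2 (m-u2) (m-u1)) as [eta [Eeta Ieta]]; [lra| |].
  { intros c Hc; apply H2; lra. }
  assert (psi2 xi <= psi2 eta) by (apply H3; lra).
  assert (psi2 xi * (u2 - u1) <= psi2 eta * (u2 - u1)) by (apply Rmult_le_compat_r; lra).
  replace (m + u2 - (m + u1)) with (u2 - u1) in Exi by ring.
  replace (m - u1 - (m - u2)) with (u2 - u1) in Eeta by ring.
  lra.
Qed.

Definition K m u := psi (m + u) - psi (m - u).
Definition K1 m u := psi1 (m + u) + psi1 (m - u).

Lemma K_der m u : 0 <= u < m -> derivable_pt_lim (K m) u (K1 m u).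
Proof.
  intros Hu. unfold K1.
  replace (psi1 (m+u) + psi1(m-u)) with (psi1 (m+u)*1 - psi1(m-u)*(-1)) by ring.
  change (K m) with ((comp psi (fun u => (m+u)%R)) - (comp psi (fun u => (m-u)%R)))%F.
  apply derivable_pt_lim_minus.
  - apply (derivable_pt_lim_comp (fun u => m + u) psi).
    + replace 1 with (0 + 1) by ring.
      change (fun u => m + u) with (fct_cte m + id)%F. apply derivable_pt_lim_plus.
      apply derivable_pt_lim_const. apply derivable_pt_lim_id.
    + apply H1; lra.
  - apply (derivable_pt_lim_comp (fun u => m - u) psi).
    + replace (-1) with (0 - 1) by ring.
      change (fun u => m - u) with (fct_cte m - id)%F. apply derivable_pt_lim_minus.
      apply derivable_pt_lim_const. apply derivable_pt_lim_id.
    + apply H1; lra.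
Qed.

Lemma K_cont m u : 0 <= u <= m -> continuity_pt (K m) u.
Proof.
  intros Hu. unfold K. apply continuity_pt_minus.
  - apply (continuity_pt_comp (fun u => m + u) psi).
    + apply continuity_pt_plus. apply continuity_pt_const; intros ? ?; auto.
      apply derivable_continuous_pt, derivable_pt_id.
    + apply psi_cont; lra.
  - apply (continuity_pt_comp (fun u => m - u) psi).
    + apply continuity_pt_minus. apply continuity_pt_const; intros ? ?; auto.
      apply derivable_continuous_pt, derivable_pt_id.
    + apply psi_cont; lra.
Qed.

Lemma lemA1 m d D : 0 < d -> d < D -> D <= m ->
  (psi (m + D) - psi (m - D)) / (2 * D) <= (psi (m + d) - psi (m - d)) / (2 * d).
Proof.
  intros hd hdD hD.
  destruct (mvt_gen (K m) (K1 m) 0 d) as [c1 [I1 E1]]; [lra| intros c Hc; apply K_der; lra | intros c Hc; apply K_cont; lra |].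
  destruct (mvt_gen (K m) (K1 m) d D) as [c2 [I2 E2]]; [lra| intros c Hc; apply K_der; lra | intros c Hc; apply K_cont; lra |].
  assert (K m 0 = 0) by (unfold K; rewrite Rplus_0_r, Rminus_0_r; ring).
  assert (K1 m c2 <= K1 m c1) by (unfold K1; apply psi1_mono; lra).
  fold (K m D) (K m d).
  assert (K m d = K1 m c1 * d) by lra.
  assert (K m D <= K1 m c1 * D) by nra.
  apply Rmult_le_reg_r with (2*D); [lra|].
  unfold Rdiv. rewrite Rmult_assoc, Rinv_l by lra.
  rewrite H5. field_simplify; [|lra]. nra.
Qed.

Lemma lemA0 m D : 0 < D -> D <= m ->
  (psi (m + D) - psi (m - D)) / (2 * D) <= psi1 m.
Proof.
  intros hD hDm.
  destruct (mvt_gen (K m) (K1 m) 0 D) as [c1 [I1 E1]]; [lra| intros c Hc; apply K_der; lra | intros c Hc; apply K_cont; lra |].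
  assert (K m 0 = 0) by (unfold K; rewrite Rplus_0_r, Rminus_0_r; ring).
  assert (K1 m c1 <= K1 m 0).
  { unfold K1. apply psi1_mono; lra. }
  unfold K1 in H0. rewrite Rplus_0_r, Rminus_0_r in H0.
  fold (K m D). apply Rmult_le_reg_r with (2*D); [lra|].
  unfold Rdiv. rewrite Rmult_assoc, Rinv_l by lra. unfold K1 in E1. nra.
Qed.
End LemA.

Definition Sg (psi psi1 : R -> R) r s :=
  if Req_EM_T r s then psi1 r else (psi s - psi r) / (s - r).

Lemma core psi psi1 psi2
  (H1 : forall t, 0 < t -> derivable_pt_lim psi t (psi1 t))
  (H2 : forall t, 0 < t -> derivable_pt_lim psi1 t (psi2 t))
  (H3 : forall t1 t2, 0 < t1 -> t1 <= t2 -> psi2 t2 <= psi2 t1)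
  (H4 : continuity_pt psi 0) r s r' s' :
  0 <= r <= s -> 0 <= r' <= s' -> r + s = r' + s' -> s <= s' -> 0 < r + s ->
  Sg psi psi1 r' s' <= Sg psi psi1 r s.
Proof.
  intros h1 h2 h3 h4 h5.
  set (m := (r + s) / 2). set (d := (s - r) / 2). set (D := (s' - r') / 2).
  destruct (Req_dec s s') as [<-|hss].
  { assert (r' = r) by lra. subst r'. lra. }
  assert (hr' : r' <> s') by lra.
  unfold Sg. destruct (Req_EM_T r' s') as [|_]; [congruence|].
  replace s' with (m + D) by (unfold m, D; lra).
  replace r' with (m - D) by (unfold m, D; lra).
  replace (m + D - (m - D)) with (2 * D) by ring.
  destruct (Req_EM_T r s) as [<-|hrs].
  - replace r with m by (unfold m; lra).
    apply (lemA0 psi psi1 psi2 H1 H2 H3 H4); unfold m, D; lra.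
  - replace s with (m + d) by (unfold m, d; lra).
    replace r with (m - d) by (unfold m, d; lra).
    replace (m + d - (m - d)) with (2 * d) by ring.
    apply (lemA1 psi psi1 psi2 H1 H2 H3 H4); unfold m, d, D; lra.
Qed.

Lemma cosh_pos w : 0 < cosh w.
Proof. unfold cosh. assert (0 < exp w) by apply exp_pos. assert (0 < exp (-w)) by apply exp_pos. lra. Qed.

Lemma cosh2_sinh2 w : cosh w ^ 2 - sinh w ^ 2 = 1.
Proof.
  unfold cosh, sinh. assert (exp w * exp (-w) = 1).
  { rewrite <- exp_plus. replace (w + - w) with 0 by ring. apply exp_0. }
  nra.
Qed.

Lemma key_ineq w : 0 < w -> w ^ 3 * cosh w <= sinh w ^ 3.
Proof.
  intros hw.
  set (Rf := fun w => sinh w * Rpower (cosh w) (- / 3) - w).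
  set (Rd := fun w => cosh w * Rpower (cosh w) (- / 3)
      + sinh w * ((- / 3 * Rpower (cosh w) (- / 3 - 1)) * sinh w) - 1).
  assert (Hd : forall c, derivable_pt_lim Rf c (Rd c)).
  { intro c. unfold Rf, Rd.
    change (fun w => sinh w * Rpower (cosh w) (- / 3) - w) with
      ((sinh * comp (fun x => Rpower x (- / 3)%R) cosh) - id)%F.
    apply derivable_pt_lim_minus; [|apply derivable_pt_lim_id].
    exact (derivable_pt_lim_mult sinh (comp (fun x => Rpower x (- / 3)) cosh) c _ _
      (derivable_pt_lim_sinh c)
      (derivable_pt_lim_comp cosh (fun x => Rpower x (- / 3)) c _ _
         (derivable_pt_lim_cosh c) (derivable_pt_lim_power (cosh c) (- / 3) (cosh_pos c)))). }
  assert (Hpos : forall c, 0 <= Rd c).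
  { intro c. unfold Rd.
    set (C := cosh c). set (T := Rpower C (/ 3)).
    assert (hC : 0 < C) by apply cosh_pos.
    assert (hT : 0 < T) by (unfold T, Rpower; apply exp_pos).
    assert (T3 : T ^ 3 = C).
    { unfold T. rewrite <- Rpower_pow by (unfold Rpower; apply exp_pos).
      rewrite Rpower_mult. simpl INR. replace (/3 * (1+1+1)) with 1 by field.
      apply Rpower_1; lra. }
    assert (E1 : Rpower C (- / 3) = / T) by (unfold T; apply Rpower_Ropp).
    assert (E2 : Rpower C (- / 3 - 1) = / T * / C).
    { unfold Rminus. rewrite Rpower_plus, E1, Rpower_Ropp, Rpower_1; lra. }
    rewrite E1, E2. assert (S2 : sinh c ^ 2 = C ^ 2 - 1) by (pose proof (cosh2_sinh2 c); unfold C; lra).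
    replace (C * / T + sinh c * (- / 3 * (/ T * / C) * sinh c) - 1)
      with (C * / T - (sinh c ^ 2) / (3 * T * C) - 1) by (field; lra).
    rewrite S2. rewrite <- T3.
    replace (T ^ 3 * / T - ((T ^ 3) ^ 2 - 1) / (3 * T * T ^ 3) - 1) with
      ((2 * (T^2)^3 - 3 * (T^2)^2 + 1) / (3 * T ^ 4)) by (field; lra).
    apply Rmult_le_pos; [| left; apply Rinv_0_lt_compat; assert (0 < T^4) by (apply pow_lt; exact hT); lra].
    assert (0 <= T^2) by nra.
    replace (2 * (T ^ 2) ^ 3 - 3 * (T ^ 2) ^ 2 + 1) with ((T^2 - 1)^2 * (2 * T^2 + 1)) by ring.
    apply Rmult_le_pos; [apply pow2_ge_0 | lra]. }
  destruct (MVT_cor2 Rf Rd 0 w hw (fun c _ => Hd c)) as [c [Ec Ic]].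
  assert (R0 : Rf 0 = 0).
  { unfold Rf, sinh. rewrite Ropp_0, exp_0. lra. }
  assert (0 <= Rf w) by (pose proof (Hpos c); nra).
  unfold Rf in H.
  set (C := cosh w) in *. set (T := Rpower C (/ 3)).
  assert (hC : 0 < C) by apply cosh_pos.
  assert (hT : 0 < T) by (unfold T, Rpower; apply exp_pos).
  assert (T3 : T ^ 3 = C).
  { unfold T. rewrite <- Rpower_pow by (unfold Rpower; apply exp_pos).
    rewrite Rpower_mult. simpl INR. replace (/3 * (1+1+1)) with 1 by field.
    apply Rpower_1; lra. }
  assert (E1 : Rpower C (- / 3) = / T) by (unfold T; apply Rpower_Ropp).
  rewrite E1 in H.
  assert (w * T <= sinh w).
  { apply Rmult_le_reg_r with (/ T). apply Rinv_0_lt_compat; lra.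
    rewrite Rmult_assoc, Rinv_r, Rmult_1_r; lra. }
  rewrite <- T3. replace (w ^ 3 * T ^ 3) with ((w * T) ^ 3) by ring.
  apply pow_incr. nra.
Qed.

Lemma dpl_eq f x l l' : derivable_pt_lim f x l -> l = l' -> derivable_pt_lim f x l'.
Proof. intros H ->; exact H. Qed.

Lemma sinh_pos w : 0 < w -> 0 < sinh w.
Proof. intros. unfold sinh. assert (exp (-w) < exp w) by (apply exp_increasing; lra). lra. Qed.

Definition pfun w := / w ^ 2 - / sinh w ^ 2.

Lemma pfun_der w : 0 < w ->
  derivable_pt_lim pfun w (- 2 / w ^ 3 + 2 * cosh w / sinh w ^ 3).
Proof.
  intros hw. pose proof (sinh_pos w hw) as hs.
  apply derivable_pt_lim_ext with
    (f := ((fct_cte 1 / (fun w => (w ^ 2)%R)) - (fct_cte 1 / comp (fun x => (x ^ 2)%R) sinh))%F).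
  { intro z; unfold pfun, fct_cte, comp, div_fct, minus_fct. unfold Rdiv. ring. }
  eapply dpl_eq.
  { apply derivable_pt_lim_minus.
    - apply derivable_pt_lim_div. apply derivable_pt_lim_const. apply derivable_pt_lim_pow.
      apply pow_nonzero; lra.
    - apply derivable_pt_lim_div. apply derivable_pt_lim_const.
      apply (derivable_pt_lim_comp sinh (fun x => (x ^ 2)%R)).
      apply derivable_pt_lim_sinh. apply derivable_pt_lim_pow.
      unfold comp. apply pow_nonzero; lra. }
  unfold fct_cte, comp, Rsqr. simpl INR. simpl Init.Nat.pred. field. split; lra.
Qed.

Lemma pfun_mono w1 w2 : 0 < w1 -> w1 <= w2 -> pfun w2 <= pfun w1.
Proof.
  intros h1 [h2|<-]; [|lra].
  destruct (MVT_cor2 pfun (fun w => - 2 / w ^ 3 + 2 * cosh w / sinh w ^ 3) w1 w2 h2)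
    as [c [Ec Ic]].
  { intros c Hc. apply pfun_der. lra. }
  assert (hc : 0 < c) by lra.
  assert (- 2 / c ^ 3 + 2 * cosh c / sinh c ^ 3 <= 0).
  { pose proof (key_ineq c hc). pose proof (sinh_pos c hc).
    assert (0 < c^3) by (apply pow_lt; lra).
    assert (0 < sinh c^3) by (apply pow_lt; lra).
    replace (- 2 / c ^ 3 + 2 * cosh c / sinh c ^ 3) with
      (2 * (c^3 * cosh c - sinh c ^ 3) / (c^3 * sinh c ^ 3)) by (field; lra).
    assert (0 < / (c^3 * sinh c ^ 3)) by (apply Rinv_0_lt_compat; nra).
    unfold Rdiv. nra. }
  nra.
Qed.

Lemma pfun_even w : pfun (- w) = pfun w.
Proof.
  unfold pfun, sinh. rewrite Ropp_involutive.
  replace ((exp (- w) - exp w) / 2) with (- ((exp w - exp (- w)) / 2)) by field.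
  replace ((- w) ^ 2) with (w ^ 2) by ring.
  replace ((- ((exp w - exp (- w)) / 2)) ^ 2) with (((exp w - exp (- w)) / 2) ^ 2) by ring.
  reflexivity.
Qed.

Section Conc.
Variables a b : R.
Hypothesis hab : a <> b.
Let k := b - a.

Definition gg t := exp (t * b) - exp (t * a).
Definition ph t := gg t / (t * k).
Definition ph0 t := if Req_EM_T t 0 then 1 else ph t.
Definition psi t := ln (ph0 t).
Definition psi1 t := (b * exp (t * b) - a * exp (t * a)) / gg t - / t.
Definition psi2 t := (k / 2) ^ 2 * pfun (k * t / 2).

Lemma gg_nz t : t <> 0 -> gg t <> 0.
Proof.
  intros ht. unfold gg. intro E.
  assert (exp (t*b) = exp (t*a)) by lra. apply exp_inv in H.
  apply hab. apply Rmult_eq_reg_l with t; lra.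
Qed.

Lemma ph_pos t : t <> 0 -> 0 < ph t.
Proof.
  intros ht. unfold ph, gg, k.
  destruct (Rlt_dec 0 (t * (b - a))) as [H|H].
  - assert (exp (t*a) < exp (t*b)) by (apply exp_increasing; nra).
    apply Rdiv_lt_0_compat; lra.
  - assert (t * (b - a) <> 0).
    { intro E. apply Rmult_integral in E. destruct E; [lra|]. apply hab; lra. }
    assert (t * (b-a) < 0) by lra.
    assert (exp (t*b) < exp (t*a)) by (apply exp_increasing; nra).
    replace ((exp (t * b) - exp (t * a)) / (t * (b - a))) with
      ((exp (t * a) - exp (t * b)) / (- (t * (b - a)))) by (field; lra).
    apply Rdiv_lt_0_compat; lra.
Qed.

Lemma dexp_lin c t : derivable_pt_lim (fun t => exp (t * c)) t (c * exp (t * c)).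
Proof.
  apply derivable_pt_lim_ext with (f := comp exp (fun t => (t * c)%R)).
  { intro z; reflexivity. }
  eapply dpl_eq.
  { apply derivable_pt_lim_comp. apply (derivable_pt_lim_scal_right id t 1 c).
    apply derivable_pt_lim_id. apply derivable_pt_lim_exp. }
  unfold comp. ring.
Qed.

Lemma gg_der t : derivable_pt_lim gg t (b * exp (t * b) - a * exp (t * a)).
Proof.
  apply derivable_pt_lim_ext with
    (f := ((fun t => exp (t * b)) - (fun t => exp (t * a)))%F).
  { intro z. reflexivity. }
  apply derivable_pt_lim_minus; apply dexp_lin.
Qed.
Lemma ph_der t : t <> 0 ->
  derivable_pt_lim ph t (((b * exp (t * b) - a * exp (t * a)) * (t * k) - k * gg t) / (t * k) ^ 2).
Proof.
  intros ht. assert (hk : k <> 0) by (unfold k; lra).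
  unfold ph.
  apply derivable_pt_lim_ext with (f := (gg / (fun t => (t * k)%R))%F).
  { intro z; reflexivity. }
  eapply dpl_eq.
  { apply derivable_pt_lim_div. apply gg_der.
    apply (derivable_pt_lim_scal_right id t 1 k). apply derivable_pt_lim_id.
    apply Rmult_integral_contrapositive; tauto. }
  unfold Rsqr. field. split; auto.
Qed.

Lemma psi_der t : t <> 0 -> derivable_pt_lim psi t (psi1 t).
Proof.
  intros ht. assert (hk : k <> 0) by (unfold k; lra).
  assert (hg := gg_nz t ht).
  set (lo := Rmin 0 (2*t)). set (hi := Rmax 0 (2*t)).
  assert (lo < t < hi).
  { unfold lo, hi, Rmin, Rmax. destruct (Rle_dec 0 (2*t)); lra. }
  apply derivable_pt_lim_locally_ext with (f := comp ln ph) (a := lo) (b := hi); auto.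
  { intros z Hz. unfold psi, ph0, comp. destruct (Req_EM_T z 0); auto.
    exfalso. subst z. unfold lo, hi, Rmin, Rmax in Hz.
    destruct (Rle_dec 0 (2*t)); lra. }
  eapply dpl_eq.
  { apply derivable_pt_lim_comp. apply ph_der; auto.
    apply derivable_pt_lim_ln. apply ph_pos; auto. }
  unfold psi1, ph. field. repeat split; auto.
Qed.

Lemma psi1_der t : t <> 0 -> derivable_pt_lim psi1 t (psi2 t).
Proof.
  intros ht. assert (hk : k <> 0) by (unfold k; lra).
  assert (hg := gg_nz t ht).
  unfold psi1.
  apply derivable_pt_lim_ext with
    (f := (((fun t => (b * exp (t * b) - a * exp (t * a))%R) / gg) - (fct_cte 1 / id))%F).
  { intro z. unfold fct_cte, id, div_fct, minus_fct. unfold Rdiv. ring. }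
  eapply dpl_eq.
  { apply derivable_pt_lim_minus.
    - apply derivable_pt_lim_div; [|apply gg_der|auto].
      apply derivable_pt_lim_ext with
        (f := (mult_real_fct b (fun t => exp (t * b)) - mult_real_fct a (fun t => exp (t * a)))%F).
      { intro z; reflexivity. }
      apply derivable_pt_lim_minus; apply derivable_pt_lim_scal; apply dexp_lin.
    - apply derivable_pt_lim_div; [apply derivable_pt_lim_const|apply derivable_pt_lim_id|auto]. }
  unfold psi2, pfun, sinh, gg, fct_cte, id, Rsqr.
  set (u := exp (k * t / 2)).
  assert (hu : 0 < u) by apply exp_pos.
  assert (Ea : 0 < exp (t * a)) by apply exp_pos.
  assert (Eb : exp (t * b) = exp (t * a) * u * u).
  { unfold u. rewrite <- !exp_plus. f_equal. unfold k. field. }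
  assert (Em : exp (- (k * t / 2)) = / u) by (unfold u; apply exp_Ropp).
  rewrite Em. unfold gg in hg. rewrite Eb in hg |- *.
  assert (u * u - 1 <> 0) by (intro; apply hg; nra).
  assert (u - / u <> 0).
  { intro E. apply H. replace (u*u - 1) with (u * (u - / u)) by (field; lra). rewrite E; ring. }
  unfold k. field. repeat split; auto; try lra.
Qed.
Lemma ph0_cont : continuity_pt ph0 0.
Proof.
  assert (hk : k <> 0) by (unfold k; lra).
  intros eps heps.
  assert (Hg := gg_der 0). rewrite !Rmult_0_l, exp_0 in Hg.
  replace (b * 1 - a * 1) with k in Hg by (unfold k; ring).
  assert (he : 0 < eps * Rabs k) by (apply Rmult_lt_0_compat; [lra| apply Rabs_pos_lt; auto]).
  destruct (Hg _ he) as [del Hdel].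
  exists del. split; [apply cond_pos|].
  intros z [[_ hz] hd]. simpl in hd. unfold R_dist, Rdist in *. rewrite Rminus_0_r in hd.
  unfold ph0. destruct (Req_EM_T z 0) as [|_]; [congruence|].
  destruct (Req_EM_T 0 0) as [_|]; [|congruence].
  assert (hz' : z <> 0) by auto.
  specialize (Hdel z hz' hd). rewrite Rplus_0_l in Hdel.
  unfold gg at 2 in Hdel. rewrite !Rmult_0_l, exp_0, Rminus_diag, Rminus_0_r in Hdel.
  unfold ph. simpl. unfold R_dist, Rdist.
  replace (gg z / (z * k) - 1) with ((gg z / z - k) / k) by (field; auto).
  unfold Rdiv at 1. rewrite Rabs_mult, Rabs_inv.
  apply Rmult_lt_reg_r with (Rabs k); [apply Rabs_pos_lt; auto|].
  rewrite Rmult_assoc, Rinv_l by (apply Rabs_no_R0; auto). lra.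
Qed.

Lemma psi_cont0 : continuity_pt psi 0.
Proof.
  unfold psi. apply (continuity_pt_comp ph0 ln). apply ph0_cont.
  apply derivable_continuous_pt. exists (/ ph0 0). apply derivable_pt_lim_ln.
  unfold ph0. destruct (Req_EM_T 0 0); [lra|congruence].
Qed.

Lemma psi_0 : psi 0 = 0.
Proof. unfold psi, ph0. destruct (Req_EM_T 0 0); [apply ln_1|congruence]. Qed.

Lemma psi2_mono t1 t2 : 0 < t1 -> t1 <= t2 -> psi2 t2 <= psi2 t1.
Proof.
  intros h1 h2. unfold psi2. apply Rmult_le_compat_l; [apply pow2_ge_0|].
  assert (hk : k <> 0) by (unfold k; lra).
  destruct (Rlt_dec 0 k).
  - apply pfun_mono; nra.
  - rewrite <- (pfun_even (k * t2 / 2)), <- (pfun_even (k * t1 / 2)).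
    apply pfun_mono; nra.
Qed.

Lemma psi2_even t : psi2 (- t) = psi2 t.
Proof.
  unfold psi2. replace (k * - t / 2) with (- (k * t / 2)) by field. rewrite pfun_even. auto.
Qed.
End Conc.

Definition Sf a b r s := if Req_EM_T r s then psi1 a b r else (psi a b s - psi a b r) / (s - r).

Lemma psi_nz a b t : t <> 0 -> psi a b t = ln (ph a b t).
Proof. intros. unfold psi, ph0. destruct (Req_EM_T t 0); [congruence|auto]. Qed.

Lemma E_exp x y r s : 0 < x -> 0 < y -> x <> y -> ~ (r = 0 /\ s = 0) ->
  E r s x y = exp (Sf (ln x) (ln y) r s).
Proof.
  intros hx hy hxy hrs.
  assert (hab : ln x <> ln y) by (intro H; apply hxy; apply ln_inv; auto).
  set (a := ln x) in *. set (b := ln y) in *.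
  assert (Rx : forall t, Rpower x t = exp (t * a)) by reflexivity.
  assert (Ry : forall t, Rpower y t = exp (t * b)) by reflexivity.
  unfold E. destruct (Req_EM_T x y) as [|_]; [congruence|].
  unfold Sf. destruct (Req_EM_T r 0) as [->|hr].
  - destruct (Req_EM_T s 0) as [->|hs]; [tauto|].
    destruct (Req_EM_T 0 s) as [|_]; [congruence|].
    rewrite psi_nz by auto. rewrite (psi_0 a b).
    unfold Rpower at 1. f_equal. fold a b. rewrite Rx, Ry.
    unfold ph, gg. replace (s * (b - a)) with (s * (b - a)) by ring.
    replace (/ s * ((exp (s * b) - exp (s * a)) / (b - a))) with
      ((exp (s * b) - exp (s * a)) / (s * (b - a))) by (field; split; auto; lra).
    field; auto.
  - destruct (Req_EM_T s 0) as [->|hs].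
    + destruct (Req_EM_T r 0) as [|_]; [congruence|].
      rewrite (psi_nz a b r hr). rewrite (psi_0 a b).
      unfold Rpower at 1. f_equal. fold a b. rewrite Rx, Ry.
      unfold ph, gg.
      replace (/ r * ((exp (r * b) - exp (r * a)) / (b - a))) with
        ((exp (r * b) - exp (r * a)) / (r * (b - a))) by (field; split; auto; lra).
      field; auto.
    + destruct (Req_EM_T r s) as [<-|hrs'].
      * unfold Rpower. rewrite <- exp_plus. f_equal. fold a b.
        unfold Rdiv. rewrite ln_mult by (try apply Rinv_0_lt_compat; apply exp_pos).
        rewrite ln_Rinv by (apply exp_pos). rewrite !ln_exp.
        assert (hg := gg_nz a b hab r hr). unfold gg in hg.
        unfold psi1, gg. field. repeat split; auto. intro; apply hg; lra.
      * rewrite (psi_nz a b s hs), (psi_nz a b r hr). rewrite Rx, Ry, Rx, Ry.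
        replace (r / s * ((exp (s * b) - exp (s * a)) / (exp (r * b) - exp (r * a))))
          with (ph a b s / ph a b r).
        2:{ unfold ph, gg. assert (hg := gg_nz a b hab r hr). unfold gg in hg.
            assert (hg2 := gg_nz a b hab s hs). unfold gg in hg2.
            field. repeat split; auto; lra. }
        unfold Rpower. f_equal.
        unfold Rdiv at 1. rewrite ln_mult, ln_Rinv by (try apply Rinv_0_lt_compat; apply ph_pos; auto).
        field. lra.
Qed.

Lemma exp_le a b : a <= b -> exp a <= exp b.
Proof. intros [h|<-]; [left; apply exp_increasing; auto | right; auto]. Qed.

Lemma Sg_sym p p1 r s : Sg p p1 r s = Sg p p1 s r.
Proof.
  unfold Sg. destruct (Req_EM_T r s) as [e|h1]; destruct (Req_EM_T s r) as [|h2]; try (subst; congruence); try (exfalso; lra).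
  field. lra.
Qed.

Lemma core2 psi psi1 psi2
  (H1 : forall t, 0 < t -> derivable_pt_lim psi t (psi1 t))
  (H2 : forall t, 0 < t -> derivable_pt_lim psi1 t (psi2 t))
  (H3 : forall t1 t2, 0 < t1 -> t1 <= t2 -> psi2 t2 <= psi2 t1)
  (H4 : continuity_pt psi 0) r s r' s' :
  0 <= r -> 0 <= s -> 0 <= r' -> 0 <= s' -> r + s = r' + s' -> Rmax r s <= Rmax r' s' ->
  0 < r + s -> Sg psi psi1 r' s' <= Sg psi psi1 r s.
Proof.
  intros.
  destruct (Rle_dec r s); destruct (Rle_dec r' s').
  - apply (core psi psi1 psi2 H1 H2 H3 H4); unfold Rmax in *;
      destruct (Rle_dec r s); destruct (Rle_dec r' s'); lra.
  - rewrite (Sg_sym _ _ r' s'). apply (core psi psi1 psi2 H1 H2 H3 H4); unfold Rmax in *;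
      destruct (Rle_dec r s); destruct (Rle_dec r' s'); lra.
  - rewrite (Sg_sym _ _ r s). apply (core psi psi1 psi2 H1 H2 H3 H4); unfold Rmax in *;
      destruct (Rle_dec r s); destruct (Rle_dec r' s'); lra.
  - rewrite (Sg_sym _ _ r s), (Sg_sym _ _ r' s'). apply (core psi psi1 psi2 H1 H2 H3 H4); unfold Rmax in *;
      destruct (Rle_dec r s); destruct (Rle_dec r' s'); lra.
Qed.

Lemma E_xx r s x : E r s x x = x.
Proof. unfold E. destruct (Req_EM_T x x); [auto|congruence]. Qed.

Section Fin.
Variables a b : R.
Hypothesis hab : a <> b.

Lemma H1p t : 0 < t -> derivable_pt_lim (psi a b) t (psi1 a b t).
Proof. intros; apply psi_der; auto; lra. Qed.
Lemma H2p t : 0 < t -> derivable_pt_lim (psi1 a b) t (psi2 a b t).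
Proof. intros; apply psi1_der; auto; lra. Qed.

Definition chi t := psi a b (- t).
Definition chi1 t := - psi1 a b (- t).
Definition chi2 t := psi2 a b (- t).

Lemma H1n t : 0 < t -> derivable_pt_lim chi t (chi1 t).
Proof.
  intros ht. unfold chi, chi1.
  apply derivable_pt_lim_ext with (f := comp (psi a b) (opp_fct id)).
  { intro; reflexivity. }
  eapply dpl_eq.
  { apply derivable_pt_lim_comp. apply derivable_pt_lim_opp, derivable_pt_lim_id.
    apply psi_der; auto. unfold opp_fct, id; lra. }
  unfold opp_fct, id. ring.
Qed.

Lemma H2n t : 0 < t -> derivable_pt_lim chi1 t (chi2 t).
Proof.
  intros ht. unfold chi1, chi2.
  apply derivable_pt_lim_ext with (f := opp_fct (comp (psi1 a b) (opp_fct id))).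
  { intro; reflexivity. }
  eapply dpl_eq.
  { apply derivable_pt_lim_opp. apply derivable_pt_lim_comp.
    apply derivable_pt_lim_opp, derivable_pt_lim_id.
    apply psi1_der; auto. unfold opp_fct, id; lra. }
  unfold opp_fct, id. ring.
Qed.

Lemma H3n t1 t2 : 0 < t1 -> t1 <= t2 -> chi2 t2 <= chi2 t1.
Proof. intros. unfold chi2. rewrite !psi2_even. apply psi2_mono; auto. Qed.

Lemma H4n : continuity_pt chi 0.
Proof.
  unfold chi.
  assert (C1 : continuity_pt (opp_fct id) 0).
  { apply continuity_pt_opp. apply derivable_continuous_pt, derivable_pt_id. }
  assert (C2 : continuity_pt (psi a b) (opp_fct id 0)).
  { unfold opp_fct, id. rewrite Ropp_0. apply psi_cont0; auto. }
  exact (continuity_pt_comp _ _ 0 C1 C2).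
Qed.

Lemma Sf_neg r s : Sf a b r s = - Sg chi chi1 (- s) (- r).
Proof.
  unfold Sf, Sg, chi, chi1. rewrite !Ropp_involutive.
  destruct (Req_EM_T r s) as [e|h1]; destruct (Req_EM_T (-s) (-r)) as [e2|h2].
  - subst; ring.
  - exfalso; apply h2; rewrite e; auto.
  - exfalso; apply h1; lra.
  - field. lra.
Qed.
End Fin.

Theorem theorem2 (x y : R) (hx : 0 < x) (hy : 0 < y) :
  SchurConcave (fun t => 0 <= t) (fun r s => E r s x y) /\
  SchurConvex (fun t => t <= 0) (fun r s => E r s x y).
Proof.
  split.
  - intros r s r' s' hr hs hr' hs' [hsum hmax].
    destruct (Req_dec x y) as [<-|hxy].
    { rewrite !E_xx. lra. }
    destruct (Req_dec (r + s) 0) as [h0|h0].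
    { assert (r = 0) by lra. assert (s = 0) by lra. assert (r' = 0) by lra. assert (s' = 0) by lra.
      subst. lra. }
    assert (hab : ln x <> ln y) by (intro H; apply hxy; apply ln_inv; auto).
    rewrite (E_exp x y r s), (E_exp x y r' s') by (auto; lra).
    apply Ropp_le_contravar, exp_le.
    unfold Sf. apply (core2 (psi (ln x) (ln y)) (psi1 (ln x) (ln y)) (psi2 (ln x) (ln y))
       (H1p _ _ hab) (H2p _ _ hab) (psi2_mono _ _ hab) (psi_cont0 _ _ hab)); auto; lra.
  - intros r s r' s' hr hs hr' hs' [hsum hmax].
    destruct (Req_dec x y) as [<-|hxy].
    { rewrite !E_xx. lra. }
    destruct (Req_dec (r + s) 0) as [h0|h0].
    { assert (r = 0) by lra. assert (s = 0) by lra. assert (r' = 0) by lra. assert (s' = 0) by lra.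
      subst. lra. }
    assert (hab : ln x <> ln y) by (intro H; apply hxy; apply ln_inv; auto).
    rewrite (E_exp x y r s), (E_exp x y r' s') by (auto; lra).
    apply exp_le. rewrite !(Sf_neg (ln x) (ln y)). apply Ropp_le_contravar.
    apply (core2 (chi (ln x) (ln y)) (chi1 (ln x) (ln y)) (chi2 (ln x) (ln y))
       (H1n _ _ hab) (H2n _ _ hab) (H3n _ _ hab) (H4n _ _ hab)); try lra;
      unfold Rmax in *; destruct (Rle_dec r s); destruct (Rle_dec r' s');
      destruct (Rle_dec (-s) (-r)); destruct (Rle_dec (-s') (-r')); lra.
Qed.
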